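(* Let $(X,e\colon X\to M\otimes X)$ be a coalgebra for $F$ on $\mathbf{Met_3}^{C}$ and let $x\in X$. Define $\chi_0=x$, $\chi_n=(M^{n-1}\otimes e)(\chi_{n-1})\in M^n\otimes X$. For any choice of $m_0,m_1,\ldots\in M$ with $\chi_n=m_0\otimes\cdots\otimes m_{n-1}\otimes x_n$ (some $x_n\in X$) for all $n$, and any $z\in\{T,L,R\}$, let $\theta_n(x)=m_0\otimes\cdots\otimes m_{n-1}\otimes z\in G$. Then the limit $\lim_{n\to\infty}\theta_n(x)$ in $S$ exists and is independent of the choice of representatives $m_0,m_1,\ldots$ and of $z$. In particular $f\colon X\to S$, $f(x)=\lim_{n\to\infty}\theta_n(x)$, is well-defined.
   Context: A tripointed metric space is a set with three distinct points $T,L,R$ and a metric bounded by $1$ in which $T,L,R$ have pairwise distance $1$. $\mathbf{Met_3}^{C}$: tripointed metric spaces with continuous maps preserving $T,L,R$. Let $M=\{a,b,c\}$. For a tripointed metric space $X$, $M\times X$ has metric $d((m,x),(n,y))=\tfrac12d(x,y)$ if $m=n$, $1$ otherwise; $M\otimes X$ is the quotient metric space by the equivalence relation generated by $(b,T)\sim(a,L)$, $(a,R)\sim(c,T)$, $(c,L)\sim(b,R)$, with elements $m\otimes x$ and distinguished points $a\otimes T,b\otimes L,c\otimes R$; $F=M\otimes-$, $(M\otimes f)(m\otimes x)=m\otimes f(x)$; $M^n\otimes-$ is the $n$-fold iterate. A coalgebra is a pair $(X,e\colon X\to FX)$. Let $I=\{T,L,R\}$ (discrete metric) and $!\colon I\to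 FI$, $T\mapsto a\otimes T$, $L\mapsto b\otimes L$, $R\mapsto c\otimes R$; the maps $F^n!$ are isometric embeddings and $G$ is the metric union (colimit) of $I\to FI\to F^2I\to\cdots$, so its elements are expressions $m_0\otimes\cdots\otimes m_{n-1}\otimes z$, $z\in\{T,L,R\}$, modulo the induced identifications, and each $M^n\otimes I$ embeds isometrically in $G$. $S$ is the Cauchy completion of $G$ (with distinguished points $T,L,R$), and $G\subseteq S$. *)

(* Defs.v *)
From Stdlib Require Import Reals List Relations.
From Coquelicot Require Import Coquelicot.
Import ListNotations.
Open Scope R_scope.

Inductive Mlet : Type := ma | mb | mc.
Definition Mlet_eq_dec (x y : Mlet) : {x = y} + {x <> y}.
Proof. decide equality. Defined.

Record TMet := { car :> Type; dist : car -> car -> R;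
                 ptT : car; ptL : car; ptR : car }.

Definition is_met3 (X : TMet) : Prop :=
  (forall x y, 0 <= dist X x y <= 1) /\
  (forall x y, dist X x y = 0 <-> x = y) /\
  (forall x y, dist X x y = dist X y x) /\
  (forall x y z, dist X x z <= dist X x y + dist X y z) /\
  dist X (ptT X) (ptL X) = 1 /\ dist X (ptL X) (ptR X) = 1 /\
  dist X (ptT X) (ptR X) = 1.

(** Representatives of elements of M^n (x) B : the list [m_0;...;m_(n-1)] and
    b in B stand for m_0 (x) (m_1 (x) ... (m_(n-1) (x) b)). *)
Definition pt (B : TMet) : Type := (list Mlet * car B)%type.

Definition tens {B : TMet} (m : Mlet) (p : pt B) : pt B := (m :: fst p, snd p).

Definition lvT (B : TMet) (n : nat) : pt B := (repeat ma n, ptT B).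
Definition lvL (B : TMet) (n : nat) : pt B := (repeat mb n, ptL B).
Definition lvR (B : TMet) (n : nat) : pt B := (repeat mc n, ptR B).

Inductive glue (B : TMet) (n : nat) : pt B -> pt B -> Prop :=
| glue1 : glue B n (tens mb (lvT B n)) (tens ma (lvL B n))
| glue2 : glue B n (tens ma (lvR B n)) (tens mc (lvT B n))
| glue3 : glue B n (tens mc (lvL B n)) (tens mb (lvR B n)).

Definition glue_eq (B : TMet) (n : nat) : pt B -> pt B -> Prop :=
  clos_refl_sym_trans (pt B) (glue B n).

Definition dprod {B : TMet} (dn : pt B -> pt B -> R) (p q : pt B) : R :=
  match fst p, fst q with
  | m :: t, m' :: t' =>
      if Mlet_eq_dec m m' then dn (t, snd p) (t', snd q) / 2 else 1
  | _, _ => 1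
  end.

(** Chains p = p_0, q_0 ~ p_1, q_1 ~ ... ~ p_k, q_k = q of points of M x (level n). *)
Fixpoint chain_ok (B : TMet) (n : nat) (p : pt B) (c : list (pt B * pt B)) (q : pt B)
  {struct c} : Prop :=
  match c with
  | [] => False
  | (p0, q0) :: rest =>
      p0 = p /\ length (fst p0) = S n /\ length (fst q0) = S n /\
      match rest with
      | [] => q0 = q
      | (p1, _) :: _ => glue_eq B n q0 p1 /\ chain_ok B n p1 rest q
      end
  end.

Definition chain_cost {B : TMet} (dn : pt B -> pt B -> R) (c : list (pt B * pt B)) : R :=
  fold_right (fun pq acc => dprod dn (fst pq) (snd pq) + acc) 0 c.

Definition qdist (B : TMet) (n : nat) (dn : pt B -> pt B -> R) (p q : pt B) : R :=
  real (Glb_Rbar (fun r => exists c, chain_ok B n p c q /\ r = chain_cost dn c)).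

(** Metric of M^n (x) B on representatives (lists of length n). *)
Fixpoint dlev (B : TMet) (n : nat) : pt B -> pt B -> R :=
  match n with
  | O => fun p q => dist B (snd p) (snd q)
  | S k => qdist B k (dlev B k)
  end.

(** Coalgebra e : X -> M (x) X (given by representatives) in Met3^C:
    continuous and preserving T, L, R. *)
Definition e1 {X : TMet} (e : car X -> Mlet * car X) (x : car X) : pt X :=
  ([fst (e x)], snd (e x)).

Definition is_coalg (X : TMet) (e : car X -> Mlet * car X) : Prop :=
  (forall x eps, 0 < eps -> exists del, 0 < del /\
     forall y, dist X x y < del -> dlev X 1 (e1 e x) (e1 e y) < eps) /\
  dlev X 1 (e1 e (ptT X)) (lvT X 1) = 0 /\
  dlev X 1 (e1 e (ptL X)) (lvL X 1) = 0 /\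
  dlev X 1 (e1 e (ptR X)) (lvR X 1) = 0.

Fixpoint chi {X : TMet} (e : car X -> Mlet * car X) (x : car X) (n : nat) : pt X :=
  match n with
  | O => ([], x)
  | S k => let p := chi e x k in
           (fst p ++ [fst (e (snd p))], snd (e (snd p)))
  end.

Definition prefix (ms : nat -> Mlet) (n : nat) : list Mlet := map ms (seq 0 n).

Definition rep_ok {X : TMet} (e : car X -> Mlet * car X) (x : car X)
  (ms : nat -> Mlet) : Prop :=
  forall n, exists xn : car X, dlev X n (chi e x n) (prefix ms n, xn) = 0.

Inductive Tp : Type := zT | zL | zR.
Definition Tp_eq_dec (x y : Tp) : {x = y} + {x <> y}.
Proof. decide equality. Defined.
Definition Idisc : TMet :=
  {| car := Tp; dist := fun x y => if Tp_eq_dec x y then 0 else 1;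
     ptT := zT; ptL := zL; ptR := zR |}.

(** ! : I -> M (x) I,  T |-> a(x)T, L |-> b(x)L, R |-> c(x)R. *)
Definition letter (z : Tp) : Mlet := match z with zT => ma | zL => mb | zR => mc end.

(** G = colimit of I -> FI -> F^2 I -> ...; an element (s,z) represents
    s_0 (x) ... (x) s_(k-1) (x) z in M^k (x) I. *)
Definition G : Type := (list Mlet * Tp)%type.

(** Image of (s,z) in M^N (x) I under F^(N-1)! o ... o F^k ! (N >= length s). *)
Definition pad (N : nat) (g : G) : pt Idisc :=
  (fst g ++ repeat (letter (snd g)) (N - length (fst g)), snd g).

(** Metric union: distance computed in a common stage M^N (x) I. *)
Definition dG (g h : G) : R :=
  let N := Nat.max (length (fst g)) (length (fst h)) in
  dlev Idisc N (pad N g) (pad N h).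

(** S = Cauchy completion of G: Cauchy sequences in G, with
    d_S(u,v) = lim d_G(u_k, v_k); G embeds via constant sequences. *)
Definition cauchyG (u : nat -> G) : Prop :=
  forall eps, 0 < eps -> exists N, forall n m, (N <= n)%nat -> (N <= m)%nat ->
    dG (u n) (u m) < eps.

Definition dS (u v : nat -> G) : R := real (Lim_seq (fun k => dG (u k) (v k))).

Definition inS (g : G) : nat -> G := fun _ => g.

Definition theta (ms : nat -> Mlet) (z : Tp) (n : nat) : G := (prefix ms n, z).

Definition is_limS (ms : nat -> Mlet) (z : Tp) (s : nat -> G) : Prop :=
  cauchyG s /\ is_lim_seq (fun n => dS (inS (theta ms z n)) s) 0.

(* Main.v *)
Require Import Defs.
From Stdlib Require Import Reals List Relations Lra Lia Classical Arith.
From Coquelicot Require Import Coquelicot.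
Import ListNotations.
Open Scope R_scope.

Lemma glb_ge (E : R -> Prop) L : (exists r, E r) -> (forall r, E r -> L <= r) ->
  L <= real (Glb_Rbar E).
Proof.
  intros [r0 Hr0] Hlb. destruct (Glb_Rbar_correct E) as [H1 H2].
  specialize (H1 r0 Hr0).
  assert (H3 : Rbar_le (Finite L) (Glb_Rbar E)) by (apply H2; intros r Hr; apply Hlb, Hr).
  destruct (Glb_Rbar E); simpl in *; tauto.
Qed.

Lemma glb_le (E : R -> Prop) r : (forall r, E r -> 0 <= r) -> E r ->
  real (Glb_Rbar E) <= r.
Proof.
  intros Hnn Hr. destruct (Glb_Rbar_correct E) as [H1 H2].
  specialize (H1 r Hr).
  assert (H3 : Rbar_le (Finite 0) (Glb_Rbar E)) by (apply H2; intros r' Hr'; apply Hnn, Hr').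
  destruct (Glb_Rbar E); simpl in *; tauto.
Qed.

Lemma glb_nn (E : R -> Prop) : (forall r, E r -> 0 <= r) -> 0 <= real (Glb_Rbar E).
Proof.
  intros Hnn. destruct (Glb_Rbar_correct E) as [H1 H2].
  assert (H3 : Rbar_le (Finite 0) (Glb_Rbar E)) by (apply H2; intros r' Hr'; apply Hnn, Hr').
  destruct (Glb_Rbar E); simpl in *; try lra; tauto.
Qed.

Lemma glb_le1 (E : R -> Prop) : (forall r, E r -> 0 <= r) ->
  (forall r, E r -> exists r', E r' /\ r' <= 1) -> real (Glb_Rbar E) <= 1.
Proof.
  intros Hnn Hex. destruct (classic (exists r, E r)) as [[r Hr]|Hno].
  - destruct (Hex r Hr) as [r' [Hr' Hle]]. eapply Rle_trans; [apply glb_le; eauto|exact Hle].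
  - destruct (Glb_Rbar_correct E) as [H1 H2].
    assert (H3 : Rbar_le p_infty (Glb_Rbar E)).
    { apply H2. intros r' Hr'. exfalso; apply Hno; eauto. }
    destruct (Glb_Rbar E); simpl in *; try lra; tauto.
Qed.

Lemma chain_len (B : TMet) n p c q : chain_ok B n p c q ->
  length (fst p) = S n /\ length (fst q) = S n.
Proof.
  revert p. induction c as [|[p0 q0] rest IH]; intros p; simpl; [tauto|].
  intros [-> [Hl1 [Hl2 Hr]]]. destruct rest as [|[p1 q1] rest'].
  - subst; auto.
  - destruct Hr as [_ Hc]. split; auto. apply (IH _ Hc).
Qed.

Lemma dprod_nn (B : TMet) (dn : pt B -> pt B -> R) : (forall p q, 0 <= dn p q) ->
  forall p q, 0 <= dprod dn p q.
Proof.
  intros H p q. unfold dprod. destruct (fst p) as [|m t]; [lra|].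
  destruct (fst q) as [|m' t']; [lra|]. destruct (Mlet_eq_dec m m'); [|lra].
  specialize (H (t, snd p) (t', snd q)). lra.
Qed.

Lemma dprod_le1 (B : TMet) (dn : pt B -> pt B -> R) : (forall p q, dn p q <= 1) ->
  forall p q, dprod dn p q <= 1.
Proof.
  intros H p q. unfold dprod. destruct (fst p) as [|m t]; [lra|].
  destruct (fst q) as [|m' t']; [lra|]. destruct (Mlet_eq_dec m m'); [|lra].
  specialize (H (t, snd p) (t', snd q)). lra.
Qed.

Lemma cost_nn (B : TMet) (dn : pt B -> pt B -> R) : (forall p q, 0 <= dn p q) ->
  forall c, 0 <= chain_cost dn c.
Proof.
  intros H c. induction c as [|[p q] c IH]; simpl; [lra|].
  pose proof (dprod_nn B dn H p q). lra.
Qed.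

Lemma dlev_nn (B : TMet) : (forall x y, 0 <= Defs.dist B x y) -> forall n p q, 0 <= dlev B n p q.
Proof.
  intros H n. induction n as [|n IH]; intros p q; simpl; auto.
  unfold qdist. apply glb_nn. intros r [c [_ ->]]. apply cost_nn; auto.
Qed.

Lemma dlev_le_dprod (B : TMet) (Hnn : forall x y, 0 <= Defs.dist B x y) n p q :
  length (fst p) = S n -> length (fst q) = S n ->
  dlev B (S n) p q <= dprod (dlev B n) p q.
Proof.
  intros Hp Hq. simpl. unfold qdist.
  rewrite <- (Rplus_0_r (dprod (dlev B n) p q)).
  apply glb_le.
  - intros r [c [_ ->]]. apply cost_nn. apply dlev_nn; auto.
  - exists [(p, q)]. simpl. tauto.
Qed.

Lemma dlev_2chain (B : TMet) (Hnn : forall x y, 0 <= Defs.dist B x y) n p u v q :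
  length (fst p) = S n -> length (fst u) = S n -> length (fst v) = S n ->
  length (fst q) = S n -> glue_eq B n u v ->
  dlev B (S n) p q <= dprod (dlev B n) p u + dprod (dlev B n) v q.
Proof.
  intros Hp Hu Hv Hq Hg. simpl. unfold qdist.
  replace (dprod (dlev B n) p u + dprod (dlev B n) v q) with
    (chain_cost (dlev B n) [(p, u); (v, q)]) by (simpl; ring).
  apply glb_le.
  - intros r [c [_ ->]]. apply cost_nn. apply dlev_nn; auto.
  - exists [(p, u); (v, q)]. simpl. tauto.
Qed.

Lemma dlev_le1 (B : TMet) : (forall x y, 0 <= Defs.dist B x y <= 1) -> forall n p q, dlev B n p q <= 1.
Proof.
  intros H n. induction n as [|n IH]; intros p q; simpl; [apply H|].
  unfold qdist. apply glb_le1.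
  - intros r [c [_ ->]]. apply cost_nn. apply dlev_nn. intros; apply H.
  - intros r [c [Hc _]]. destruct (chain_len _ _ _ _ _ Hc) as [Hp Hq].
    exists (chain_cost (dlev B n) [(p, q)]). split.
    + exists [(p,q)]. simpl. tauto.
    + simpl. pose proof (dprod_le1 B (dlev B n) IH p q). lra.
Qed.

Lemma glue_eq_f (B : TMet) n (f : pt B -> R) : (forall u v, glue B n u v -> f u = f v) ->
  forall u v, glue_eq B n u v -> f u = f v.
Proof.
  intros H u v Hg. induction Hg; auto; congruence.
Qed.

Lemma lip_chain (B : TMet) n (dn : pt B -> pt B -> R) (f : pt B -> R) K :
  (forall u v, length (fst u) = S n -> length (fst v) = S n ->
     Rabs (f u - f v) <= K * dprod dn u v) ->
  (forall u v, glue B n u v -> f u = f v) ->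
  forall c p q, chain_ok B n p c q -> Rabs (f p - f q) <= K * chain_cost dn c.
Proof.
  intros Hl Hg c. induction c as [|[p0 q0] rest IH]; intros p q; simpl; [tauto|].
  intros [-> [Hl1 [Hl2 Hr]]]. destruct rest as [|[p1 q1] rest'].
  - subst q0. rewrite Rplus_0_r. apply Hl; auto.
  - destruct Hr as [Hge Hc]. specialize (IH p1 q Hc).
    pose proof (glue_eq_f B n f Hg _ _ Hge) as Heq.
    pose proof (Hl p q0 Hl1 Hl2) as H0.
    pose proof (Rabs_triang (f p - f q0) (f q0 - f q)) as Ht.
    replace (f p - f q0 + (f q0 - f q)) with (f p - f q) in Ht by ring.
    rewrite Heq in H0, Ht. simpl in IH. simpl.
    rewrite Rmult_plus_distr_l. lra.
Qed.

Lemma lip_dlev (B : TMet) (Hnn : forall x y, 0 <= Defs.dist B x y) n (f : pt B -> R) K :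
  0 < K ->
  (forall u v, length (fst u) = S n -> length (fst v) = S n ->
     Rabs (f u - f v) <= K * dprod (dlev B n) u v) ->
  (forall u v, glue B n u v -> f u = f v) ->
  forall p q, length (fst p) = S n -> length (fst q) = S n ->
  Rabs (f p - f q) <= K * dlev B (S n) p q.
Proof.
  intros HK Hl Hg p q Hp Hq.
  assert (Rabs (f p - f q) / K <= dlev B (S n) p q).
  { simpl. unfold qdist. apply glb_ge.
    - exists (chain_cost (dlev B n) [(p,q)]). exists [(p,q)]. simpl. tauto.
    - intros r [c [Hc ->]]. pose proof (lip_chain B n _ f K Hl Hg c p q Hc).
      apply Rmult_le_reg_l with K; auto. field_simplify; lra. }
  apply Rmult_le_reg_r with (/ K). apply Rinv_0_lt_compat; auto.
  replace (K * dlev B (S n) p q * / K) with (dlev B (S n) p q) by (field; lra).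
  exact H.
Qed.

Definition vert (B : TMet) (m : Mlet) : car B :=
  match m with ma => ptT B | mb => ptL B | mc => ptR B end.
Definition bse (B : TMet) (k : Mlet) (x : car B) : R :=
  Rmax 0 (1 - 2 * Defs.dist B x (vert B k)).
Definition indm (m k : Mlet) : R := if Mlet_eq_dec m k then 1 else 0.
Definition cc (k : Mlet) (b : R) (w : list Mlet) : R :=
  fold_right (fun m acc => (indm m k + acc) / 2) b w.
Definition co (B : TMet) (k : Mlet) (p : pt B) : R := cc k (bse B k (snd p)) (fst p).

Lemma cc_cons k b m w : cc k b (m :: w) = (indm m k + cc k b w) / 2.
Proof. reflexivity. Qed.
Lemma cc_nil k b : cc k b [] = b.
Proof. reflexivity. Qed.

Lemma indm_01 m k : 0 <= indm m k <= 1.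
Proof. unfold indm; destruct (Mlet_eq_dec m k); lra. Qed.

Lemma cc_bounds k b w : 0 <= b <= 1 -> 0 <= cc k b w <= 1.
Proof.
  intros Hb. induction w as [|m w IH]; [exact Hb|]. rewrite cc_cons.
  pose proof (indm_01 m k). lra.
Qed.

Lemma half_pos i : 0 < (1/2)^i.
Proof. apply pow_lt; lra. Qed.
Lemma half_le1 i : (1/2)^i <= 1.
Proof. induction i; simpl; [lra|]. pose proof (half_pos i). lra. Qed.

Lemma cc_diff k b1 b2 w :
  Rabs (cc k b1 w - cc k b2 w) = (1/2)^(length w) * Rabs (b1 - b2).
Proof.
  induction w as [|m w IH]; simpl length; [simpl; ring|].
  rewrite !cc_cons.
  replace ((indm m k + cc k b1 w) / 2 - (indm m k + cc k b2 w) / 2)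
    with ((cc k b1 w - cc k b2 w) * (1/2)) by field.
  rewrite Rabs_mult, IH, (Rabs_pos_eq (1/2)) by lra. simpl. ring.
Qed.

Lemma cc_app k b w r : cc k b (w ++ r) = cc k (cc k b r) w.
Proof. unfold cc. apply fold_right_app. Qed.

Lemma cc_rep k j n : cc k (indm j k) (repeat j n) = indm j k.
Proof.
  induction n as [|n IH]; [reflexivity|]. simpl repeat. rewrite cc_cons, IH. field.
Qed.

Lemma bse_bounds (B : TMet) k x : 0 <= Defs.dist B x (vert B k) -> 0 <= bse B k x <= 1.
Proof. intros H. unfold bse, Rmax. destruct (Rle_dec 0 _); lra. Qed.

Lemma co_bounds (B : TMet) k p : (forall x y, 0 <= Defs.dist B x y) -> 0 <= co B k p <= 1.
Proof. intros H. unfold co. apply cc_bounds, bse_bounds, H. Qed.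

Record good (B : TMet) : Prop := {
  g_nn : forall x y, 0 <= Defs.dist B x y;
  g_sym : forall x y, Defs.dist B x y = Defs.dist B y x;
  g_tri : forall x y z, Defs.dist B x z <= Defs.dist B x y + Defs.dist B y z;
  g_refl : forall x, Defs.dist B x x = 0;
  g_vert : forall j k, j <> k -> Defs.dist B (vert B j) (vert B k) = 1 }.

Lemma bse_lip (B : TMet) (HB : good B) k x y :
  Rabs (bse B k x - bse B k y) <= 2 * Defs.dist B x y.
Proof.
  pose proof (g_tri B HB x y (vert B k)). pose proof (g_tri B HB y x (vert B k)).
  pose proof (g_sym B HB x y). pose proof (g_nn B HB x y).
  unfold bse, Rmax. destruct (Rle_dec 0 _); destruct (Rle_dec 0 _); apply Rabs_le; lra.
Qed.

Lemma bse_vert (B : TMet) (HB : good B) j k : bse B k (vert B j) = indm j k.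
Proof.
  unfold bse, indm. destruct (Mlet_eq_dec j k) as [->|Hne].
  - rewrite (g_refl B HB). unfold Rmax; destruct (Rle_dec 0 _); lra.
  - rewrite (g_vert B HB j k Hne). unfold Rmax; destruct (Rle_dec 0 _); lra.
Qed.

Lemma co_lv (B : TMet) (HB : good B) k j n :
  co B k (repeat j n, vert B j) = indm j k.
Proof. unfold co. simpl fst; simpl snd. rewrite bse_vert by exact HB. apply cc_rep. Qed.

Lemma co_lip (B : TMet) (HB : good B) k : forall n p q,
  length (fst p) = n -> length (fst q) = n ->
  Rabs (co B k p - co B k q) <= 2 * dlev B n p q.
Proof.
  pose proof (g_nn B HB) as Hnn.
  intros n. induction n as [|n IH]; intros [w x] [w' y] Hp Hq; simpl fst in *.
  - destruct w; [|discriminate]. destruct w'; [|discriminate].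
    unfold co; simpl. apply bse_lip; auto.
  - apply lip_dlev; auto; [lra| |].
    + intros [u x1] [v y1] Hu Hv. simpl fst in *.
      destruct u as [|m t]; [discriminate|]. destruct v as [|m' t']; [discriminate|].
      unfold co; simpl fst; simpl snd. rewrite !cc_cons. unfold dprod; simpl fst; simpl snd.
      destruct (Mlet_eq_dec m m') as [Heq|Hne].
      * subst m'. destruct (Mlet_eq_dec m m) as [_|C]; [|congruence].
        simpl in Hu, Hv. injection Hu; injection Hv; intros.
        specialize (IH (t, x1) (t', y1) H0 H). unfold co in IH; simpl fst in IH; simpl snd in IH.
        replace ((indm m k + cc k (bse B k x1) t) / 2 - (indm m k + cc k (bse B k y1) t') / 2)
          with ((cc k (bse B k x1) t - cc k (bse B k y1) t') * (1/2)) by field.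
        rewrite Rabs_mult, (Rabs_pos_eq (1/2)) by lra. lra.
      * destruct (Mlet_eq_dec m m') as [C|_]; [congruence|].
        pose proof (cc_bounds k (bse B k x1) t (bse_bounds B k x1 (Hnn _ _))).
        pose proof (cc_bounds k (bse B k y1) t' (bse_bounds B k y1 (Hnn _ _))).
        pose proof (indm_01 m k). pose proof (indm_01 m' k).
        apply Rabs_le; lra.
    + intros u v Hg. destruct Hg; unfold tens, lvT, lvL, lvR; unfold co; simpl fst; simpl snd;
        rewrite !cc_cons.
      * change (ptT B) with (vert B ma). change (ptL B) with (vert B mb).
        rewrite !bse_vert, !cc_rep by exact HB. lra.
      * change (ptT B) with (vert B ma). change (ptR B) with (vert B mc).
        rewrite !bse_vert, !cc_rep by exact HB. lra.
      * change (ptL B) with (vert B mb). change (ptR B) with (vert B mc).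
        rewrite !bse_vert, !cc_rep by exact HB. lra.
Qed.

Lemma glue_shared (B : TMet) n m m' : m <> m' ->
  glue_eq B n (m :: repeat m' n, vert B m') (m' :: repeat m n, vert B m).
Proof.
  intros Hne. unfold glue_eq.
  destruct m, m'; try congruence; simpl vert.
  - apply rst_sym, rst_step. exact (glue1 B n).
  - apply rst_step. exact (glue2 B n).
  - apply rst_step. exact (glue1 B n).
  - apply rst_sym, rst_step. exact (glue3 B n).
  - apply rst_sym, rst_step. exact (glue2 B n).
  - apply rst_step. exact (glue3 B n).
Qed.

Lemma Mdec_refl (A : Type) k (x y : A) : (if Mlet_eq_dec k k then x else y) = x.
Proof. destruct (Mlet_eq_dec k k); congruence. Qed.
Lemma Mdec_ne (A : Type) k k' (x y : A) : k <> k' -> (if Mlet_eq_dec k k' then x else y) = y.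
Proof. destruct (Mlet_eq_dec k k'); congruence. Qed.

Lemma good_I : good Idisc.
Proof.
  constructor; simpl.
  - intros x y; destruct (Tp_eq_dec x y); lra.
  - intros x y; destruct (Tp_eq_dec x y), (Tp_eq_dec y x); subst; try lra; congruence.
  - intros x y z; destruct (Tp_eq_dec x z), (Tp_eq_dec x y), (Tp_eq_dec y z); subst; try lra; congruence.
  - intros x; destruct (Tp_eq_dec x x); [lra|congruence].
  - intros j k H; destruct j, k; try congruence; simpl; reflexivity.
Qed.

Lemma I01 : forall x y, 0 <= Defs.dist Idisc x y <= 1.
Proof. intros x y; simpl; destruct (Tp_eq_dec x y); lra. Qed.

Lemma bseI k z : bse Idisc k z = indm (letter z) k.
Proof.
  unfold bse, indm, Rmax; destruct z, k; simpl;
  repeat (destruct (Rle_dec _ _)); repeat (destruct (Mlet_eq_dec _ _)); try congruence; lra.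
Qed.

Lemma vert_letter z : vert Idisc (letter z) = z.
Proof. destruct z; reflexivity. Qed.

Lemma letter_inj z z' : letter z = letter z' -> z = z'.
Proof. destruct z, z'; simpl; congruence. Qed.

Lemma dlevI_nn n p q : 0 <= dlev Idisc n p q.
Proof. apply dlev_nn. intros; apply I01. Qed.
Lemma dlevI_le1 n p q : dlev Idisc n p q <= 1.
Proof. apply dlev_le1. apply I01. Qed.

Lemma W_lem i : forall k t z, 1 - (1/2)^i < co Idisc k (t, z) ->
  dlev Idisc (length t) (t, z) (repeat k (length t), vert Idisc k) <= (1/2)^i /\
  dlev Idisc (length t) (repeat k (length t), vert Idisc k) (t, z) <= (1/2)^i.
Proof.
  induction i as [|i IH]; intros k t z H.
  - simpl. split; apply dlevI_le1.
  - pose proof (half_pos i) as Hp. pose proof (half_le1 i). simpl pow in *.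
    destruct t as [|m t].
    + unfold co in H; simpl fst in H; simpl snd in H. rewrite cc_nil, bseI in H.
      unfold indm in H. simpl pow in H. destruct (Mlet_eq_dec (letter z) k) as [<-|]; [|pose proof (half_le1 i); lra].
      rewrite vert_letter. simpl. destruct (Tp_eq_dec z z); [split; lra|congruence].
    + unfold co in H; simpl fst in H; simpl snd in H. rewrite cc_cons in H.
      pose proof (cc_bounds k (bse Idisc k z) t (bse_bounds _ _ _ (g_nn _ good_I _ _))).
      assert (Hmk : m = k).
      { unfold indm in H. destruct (Mlet_eq_dec m k); auto. lra. }
      subst m. unfold indm in H. destruct (Mlet_eq_dec k k) as [_|C]; [|congruence].
      assert (H' : 1 - (1/2)^i < co Idisc k (t, z)) by (unfold co; simpl; lra).
      destruct (IH k t z H') as [W1 W2].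
      simpl length. simpl repeat.
      split; (eapply Rle_trans; [apply dlev_le_dprod; [intros; apply I01| |]; simpl; rewrite ?repeat_length; reflexivity|]);
      unfold dprod; cbn [fst snd]; rewrite Mdec_refl; lra.
Qed.

Lemma A_lem i : forall w w' z z', length w = length w' ->
  (forall k, Rabs (co Idisc k (w, z) - co Idisc k (w', z')) <= /4 * (1/2)^i) ->
  dlev Idisc (length w) (w, z) (w', z') <= (1/2)^i.
Proof.
  induction i as [|i IH]; intros w w' z z' Hlen H.
  - simpl. apply dlevI_le1.
  - pose proof (half_pos i) as Hp. pose proof (half_le1 i). simpl pow in *.
    destruct w as [|m t]; destruct w' as [|m' t']; try discriminate.
    + assert (z = z').
      { specialize (H (letter z)). unfold co in H; simpl fst in H; simpl snd in H.
        rewrite !cc_nil, !bseI in H. unfold indm in H.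
        destruct (Mlet_eq_dec (letter z) (letter z)) as [_|C]; [|congruence].
        destruct (Mlet_eq_dec (letter z') (letter z)) as [E|Ne].
        - apply letter_inj; auto.
        - rewrite Rminus_0_r, Rabs_R1 in H. lra. }
      subst z'. simpl. destruct (Tp_eq_dec z z); [lra|congruence].
    + simpl in Hlen. injection Hlen as Hlen.
      destruct (Mlet_eq_dec m m') as [Heq|Hne].
      * subst m'.
        assert (Ht : forall k, Rabs (co Idisc k (t, z) - co Idisc k (t', z')) <= /4 * (1/2)^i).
        { intros k. specialize (H k). unfold co in H |- *; simpl fst in *; simpl snd in *.
          rewrite !cc_cons in H.
          replace ((indm m k + cc k (bse Idisc k z) t) / 2 - (indm m k + cc k (bse Idisc k z') t') / 2)
            with ((cc k (bse Idisc k z) t - cc k (bse Idisc k z') t') * (1/2)) in H by field.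
          rewrite Rabs_mult, (Rabs_pos_eq (1/2)) in H by lra. lra. }
        specialize (IH t t' z z' Hlen Ht).
        change (length (m :: t)) with (S (length t)).
        eapply Rle_trans; [apply dlev_le_dprod; [intros; apply I01| |]; cbn [fst]; simpl length; congruence|].
        unfold dprod; cbn [fst snd]; rewrite Mdec_refl.
        lra.
      * set (n := length t).
        assert (Ha : 1 - (1/2) ^ S i < co Idisc m' (t, z)).
        { specialize (H m'). unfold co in H |- *; simpl fst in *; simpl snd in *.
          rewrite !cc_cons in H. unfold indm at 1 2 in H.
          destruct (Mlet_eq_dec m m') as [C|_]; [congruence|].
          destruct (Mlet_eq_dec m' m') as [_|C]; [|congruence].
          pose proof (cc_bounds m' (bse Idisc m' z') t' (bse_bounds _ _ _ (g_nn _ good_I _ _))).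
          apply Rabs_le_between in H. simpl pow. lra. }
        assert (Hb : 1 - (1/2) ^ S i < co Idisc m (t', z')).
        { specialize (H m). unfold co in H |- *; simpl fst in *; simpl snd in *.
          rewrite !cc_cons in H. unfold indm at 1 2 in H.
          destruct (Mlet_eq_dec m' m) as [C|_]; [congruence|].
          destruct (Mlet_eq_dec m m) as [_|C]; [|congruence].
          pose proof (cc_bounds m (bse Idisc m z) t (bse_bounds _ _ _ (g_nn _ good_I _ _))).
          apply Rabs_le_between in H. simpl pow. lra. }
        destruct (W_lem (S i) m' t z Ha) as [Wa _].
        destruct (W_lem (S i) m t' z' Hb) as [_ Wb].
        rewrite <- Hlen in Wb. fold n in Wa, Wb. simpl pow in Wa, Wb.
        change (length (m :: t)) with (S n).
        eapply Rle_trans.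
        { apply (dlev_2chain Idisc (fun x y => proj1 (I01 x y)) n
                   (m :: t, z) (m :: repeat m' n, vert Idisc m')
                   (m' :: repeat m n, vert Idisc m) (m' :: t', z'));
            simpl; rewrite ?repeat_length; try reflexivity; try (f_equal; lia).
          apply glue_shared; auto. }
        unfold dprod; cbn [fst snd]; rewrite !Mdec_refl.
        lra.
Qed.

Lemma co_pad k (g : G) N : co Idisc k (pad N g) = co Idisc k g.
Proof.
  destruct g as [w z]. unfold pad, co. cbn [fst snd]. rewrite cc_app. f_equal.
  rewrite bseI. apply cc_rep.
Qed.

Lemma len_pad (g : G) N : (length (fst g) <= N)%nat -> length (fst (pad N g)) = N.
Proof.
  destruct g as [w z]. unfold pad. cbn [fst snd]. intros H.
  rewrite length_app, repeat_length. lia.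
Qed.

Lemma LBG k (g h : G) : Rabs (co Idisc k g - co Idisc k h) <= 2 * dG g h.
Proof.
  unfold dG. set (N := Nat.max (length (fst g)) (length (fst h))).
  rewrite <- (co_pad k g N), <- (co_pad k h N).
  apply co_lip; [exact good_I| |]; apply len_pad; unfold N; lia.
Qed.

Lemma dG_nn g h : 0 <= dG g h.
Proof. apply dlevI_nn. Qed.
Lemma dG_le1 g h : dG g h <= 1.
Proof. apply dlevI_le1. Qed.

Lemma UBG i (g h : G) :
  (forall k, Rabs (co Idisc k g - co Idisc k h) <= /4 * (1/2)^i) -> dG g h <= (1/2)^i.
Proof.
  intros H. unfold dG. set (N := Nat.max (length (fst g)) (length (fst h))).
  assert (Hg : length (fst (pad N g)) = N) by (apply len_pad; unfold N; lia).
  assert (Hh : length (fst (pad N h)) = N) by (apply len_pad; unfold N; lia).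
  destruct (pad N g) as [W z] eqn:EG. destruct (pad N h) as [W' z'] eqn:EH.
  cbn [fst] in Hg, Hh. rewrite <- Hg at 1.
  apply A_lem; [congruence|].
  intros k. rewrite <- EG, <- EH, !co_pad. apply H.
Qed.

Lemma half_mono N n : (N <= n)%nat -> (1/2)^n <= (1/2)^N.
Proof.
  intros H. replace n with (N + (n - N))%nat by lia. rewrite pow_add.
  pose proof (half_pos N). pose proof (half_le1 (n - N)). nra.
Qed.

Lemma len_prefix ms n : length (prefix ms n) = n.
Proof. unfold prefix. rewrite length_map, length_seq. reflexivity. Qed.

Lemma prefix_split ms n m : (n <= m)%nat ->
  prefix ms m = prefix ms n ++ map ms (seq n (m - n)).
Proof.
  intros H. unfold prefix. replace m with (n + (m - n))%nat at 1 by lia.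
  rewrite seq_app, map_app. reflexivity.
Qed.

Lemma cc_close k b1 b2 w : 0 <= b1 <= 1 -> 0 <= b2 <= 1 ->
  Rabs (cc k b1 w - cc k b2 w) <= (1/2)^(length w).
Proof.
  intros H1 H2. rewrite cc_diff. pose proof (half_pos (length w)).
  assert (Rabs (b1 - b2) <= 1) by (apply Rabs_le; lra). nra.
Qed.

Lemma bseI01 k z : 0 <= bse Idisc k z <= 1.
Proof. apply bse_bounds. apply I01. Qed.

Lemma theta_coord ms z n m k : (n <= m)%nat ->
  Rabs (co Idisc k (theta ms z n) - co Idisc k (theta ms z m)) <= (1/2)^n.
Proof.
  intros H. unfold theta, co. cbn [fst snd]. rewrite (prefix_split ms n m H), cc_app.
  eapply Rle_trans; [apply cc_close; [apply bseI01|apply cc_bounds, bseI01]|].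
  rewrite len_prefix. lra.
Qed.

Lemma theta_close ms z n m : (n <= m)%nat ->
  dG (theta ms z n) (theta ms z m) <= 4 * (1/2)^n /\
  dG (theta ms z m) (theta ms z n) <= 4 * (1/2)^n.
Proof.
  intros H. destruct (le_lt_dec 2 n) as [H2|H2].
  - assert (E : (1/2)^n = /4 * (1/2)^(n-2)).
    { replace n with (2 + (n - 2))%nat at 1 by lia. rewrite pow_add. simpl. field. }
    pose proof (half_pos n).
    split; (eapply Rle_trans; [apply UBG with (i := (n-2)%nat)|]).
    + intros k. rewrite <- E. apply theta_coord; auto.
    + rewrite E; lra.
    + intros k. rewrite Rabs_minus_sym, <- E. apply theta_coord; auto.
    + rewrite E; lra.
  - assert (1 <= 4 * (1/2)^n).
    { destruct n as [|[|n]]; [simpl; lra|simpl; lra|lia]. }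
    pose proof (dG_le1 (theta ms z n) (theta ms z m)).
    pose proof (dG_le1 (theta ms z m) (theta ms z n)). lra.
Qed.

Lemma lim_bounds (u : nat -> R) b : (forall k, 0 <= u k) ->
  (exists N, forall k, (N <= k)%nat -> u k <= b) ->
  0 <= real (Lim_seq u) <= b.
Proof.
  intros H0 [N HN].
  assert (E1 : Rbar_le (Lim_seq u) (Lim_seq (fun _ => b))).
  { apply Lim_seq_le_loc. exists N. auto. }
  assert (E2 : Rbar_le (Lim_seq (fun _ => 0)) (Lim_seq u)).
  { apply Lim_seq_le_loc. exists 0%nat. auto. }
  rewrite Lim_seq_const in E1, E2.
  destruct (Lim_seq u); simpl in *; try tauto; lra.
Qed.

Lemma lim_half : is_lim_seq (fun n => (1/2)^n) 0.
Proof. apply is_lim_seq_geom. rewrite Rabs_pos_eq; lra. Qed.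

Lemma squeeze_abs (u v : nat -> R) l : is_lim_seq v 0 ->
  (forall n, Rabs (u n - l) <= 2 * v n) -> is_lim_seq u l.
Proof.
  intros Hv H. apply is_lim_seq_spec. apply is_lim_seq_spec in Hv. intros eps.
  assert (He : 0 < eps / 2) by (destruct eps; simpl; lra).
  destruct (Hv (mkposreal _ He)) as [N HN]. exists N. intros n Hn.
  specialize (HN n Hn). simpl in HN. specialize (H n).
  rewrite Rminus_0_r in HN. apply Rabs_lt_between in HN. lra.
Qed.

Lemma good_X (X : TMet) : is_met3 X -> good X.
Proof.
  intros [H1 [H2 [H3 [H4 [H5 [H6 H7]]]]]]. constructor; auto.
  - intros; apply H1.
  - intros x; apply H2; reflexivity.
  - intros j k Hne; destruct j, k; try congruence; simpl; auto;
      rewrite H3; auto.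
Qed.

Lemma chi_len (X : TMet) e (x : car X) n : length (fst (chi e x n)) = n.
Proof.
  induction n as [|n IH]; [reflexivity|]. simpl. rewrite length_app, IH. simpl. lia.
Qed.

Lemma rep_coord (X : TMet) (HX : is_met3 X) e x ms : rep_ok e x ms ->
  forall n, exists xn, forall k, co X k (chi e x n) = co X k (prefix ms n, xn).
Proof.
  intros Hr n. destruct (Hr n) as [xn Hxn]. exists xn. intros k.
  pose proof (co_lip X (good_X X HX) k n (chi e x n) (prefix ms n, xn) (chi_len X e x n)
    (len_prefix ms n)) as H.
  rewrite Hxn, Rmult_0_r in H. pose proof (Rabs_pos (co X k (chi e x n) - co X k (prefix ms n, xn))).
  assert (Rabs (co X k (chi e x n) - co X k (prefix ms n, xn)) = 0) by lra.
  apply Rabs_eq_0 in H1. lra.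
Qed.

Lemma coord_conv (s : nat -> G) : cauchyG s ->
  forall k, exists g : R, is_lim_seq (fun j => co Idisc k (s j)) g.
Proof.
  intros Hc k. apply ex_lim_seq_cauchy_corr. intros eps.
  assert (He : 0 < eps / 2) by (destruct eps; simpl; lra).
  destruct (Hc _ He) as [N HN]. exists N. intros n m Hn Hm.
  pose proof (LBG k (s n) (s m)). pose proof (HN n m Hn Hm). lra.
Qed.

Lemma dS_lower (s : nat -> G) k (g0 : R) : is_lim_seq (fun j => co Idisc k (s j)) g0 ->
  forall g, Rabs (co Idisc k g - g0) <= 2 * dS (inS g) s.
Proof.
  intros Hl g. unfold dS, inS.
  assert (Hu : is_lim_seq (fun j => Rabs (co Idisc k g - co Idisc k (s j)) * / 2)
                 (Rabs (co Idisc k g - g0) * / 2)).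
  { apply (is_lim_seq_scal_r _ _ (Finite (Rabs (co Idisc k g - g0)))).
    apply (is_lim_seq_abs _ (Finite (co Idisc k g - g0))).
    apply is_lim_seq_minus'; [apply is_lim_seq_const|exact Hl]. }
  assert (E1 : Rbar_le (Lim_seq (fun j => Rabs (co Idisc k g - co Idisc k (s j)) * / 2))
                 (Lim_seq (fun j => dG g (s j)))).
  { apply Lim_seq_le_loc. exists 0%nat. intros j _. pose proof (LBG k g (s j)). lra. }
  rewrite (is_lim_seq_unique _ _ Hu) in E1.
  assert (E2 : Rbar_le (Lim_seq (fun j => dG g (s j))) (Lim_seq (fun _ => 1))).
  { apply Lim_seq_le_loc. exists 0%nat. intros j _. apply dG_le1. }
  rewrite Lim_seq_const in E2.
  destruct (Lim_seq (fun j => dG g (s j))); simpl in *; try tauto. lra.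
Qed.

Theorem mainTheorem5 (X : TMet) (HX : is_met3 X)
  (e : car X -> Mlet * car X) (He : is_coalg X e) (x : car X) :
  (forall (ms : nat -> Mlet) (z : Tp), rep_ok e x ms ->
     exists s : nat -> G, is_limS ms z s) /\
  (forall (ms ms' : nat -> Mlet) (z z' : Tp) (s s' : nat -> G),
     rep_ok e x ms -> rep_ok e x ms' ->
     is_limS ms z s -> is_limS ms' z' s' -> dS s s' = 0).
Proof.
  assert (Hh : Rabs (1/2) < 1) by (rewrite Rabs_pos_eq; lra).
  split.
  - intros ms z _. exists (theta ms z). split.
    + intros eps Heps.
      destruct (pow_lt_1_zero (1/2) Hh (eps/4) ltac:(lra)) as [N HN]. exists N.
      intros n m Hn Hm. specialize (HN N (Nat.le_refl N)).
      rewrite Rabs_pos_eq in HN by (left; apply half_pos).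
      destruct (Nat.le_ge_cases n m) as [Hnm|Hnm].
      * destruct (theta_close ms z n m Hnm) as [H1 _].
        pose proof (half_mono N n Hn). lra.
      * destruct (theta_close ms z m n Hnm) as [_ H1].
        pose proof (half_mono N m Hm). lra.
    + apply is_lim_seq_le_le with (u := fun _ => 0) (w := fun n => 4 * (1/2)^n).
      * intros n. unfold dS, inS. apply lim_bounds.
        -- intros k. apply dG_nn.
        -- exists n. intros k Hk. apply (theta_close ms z n k Hk).
      * apply is_lim_seq_const.
      * replace (Finite 0) with (Rbar_mult 4 (Finite 0)) by (simpl; f_equal; ring).
        apply is_lim_seq_scal_l. apply lim_half.
  - intros ms ms' z z' s s' Hr Hr' [Hc Hl] [Hc' Hl'].
    assert (Hk : forall k, is_lim_seq (fun j => co Idisc k (s j) - co Idisc k (s' j)) 0).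
    { intros k. destruct (coord_conv s Hc k) as [g Hg].
      destruct (coord_conv s' Hc' k) as [g' Hg'].
      assert (Ht' : is_lim_seq (fun n => co Idisc k (theta ms' z' n)) g').
      { apply squeeze_abs with (v := fun n => dS (inS (theta ms' z' n)) s'); [exact Hl'|].
        intros n. apply dS_lower; auto. }
      assert (Hd : forall n, Rabs (co Idisc k (theta ms z n) - co Idisc k (theta ms' z' n))
                             <= 2 * (1/2)^n).
      { intros n. destruct (rep_coord X HX e x ms Hr n) as [xn Hxn].
        destruct (rep_coord X HX e x ms' Hr' n) as [xn' Hxn'].
        pose proof (eq_trans (eq_sym (Hxn k)) (Hxn' k)) as E. unfold co in E; cbn [fst snd] in E.
        unfold theta, co; cbn [fst snd].
        pose proof (g_nn X (good_X X HX)) as Hnn.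
        pose proof (cc_close k (bse Idisc k z) (bse X k xn) (prefix ms n) (bseI01 k z)
                      (bse_bounds X k xn (Hnn _ _))) as C1.
        pose proof (cc_close k (bse Idisc k z') (bse X k xn') (prefix ms' n) (bseI01 k z')
                      (bse_bounds X k xn' (Hnn _ _))) as C2.
        rewrite !len_prefix in C1, C2. rewrite E in C1.
        apply Rabs_le_between in C1. apply Rabs_le_between in C2. apply Rabs_le. lra. }
      assert (Ht'' : is_lim_seq (fun n => co Idisc k (theta ms' z' n)) g).
      { apply squeeze_abs with (v := fun n => (1/2)^n + dS (inS (theta ms z n)) s).
        - replace (Finite 0) with (Finite (0 + 0)) by (f_equal; ring).
          apply is_lim_seq_plus'; [apply lim_half|exact Hl].
        - intros n. pose proof (Hd n) as D1. pose proof (dS_lower s k g Hg (theta ms z n)) as D2.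
          apply Rabs_le_between in D1. apply Rabs_le_between in D2. apply Rabs_le. lra. }
      assert (g = g').
      { pose proof (is_lim_seq_unique _ _ Ht'') as U1.
        pose proof (is_lim_seq_unique _ _ Ht') as U2.
        rewrite U1 in U2. injection U2; auto. }
      subst g'. replace (Finite 0) with (Finite (g - g)) by (f_equal; ring).
      apply is_lim_seq_minus'; auto. }
    unfold dS.
    assert (HL : is_lim_seq (fun j => dG (s j) (s' j)) 0).
    { apply is_lim_seq_spec. intros eps.
      destruct (pow_lt_1_zero (1/2) Hh eps (cond_pos eps)) as [i Hi].
      specialize (Hi i (Nat.le_refl i)). rewrite Rabs_pos_eq in Hi by (left; apply half_pos).
      assert (Hdel : 0 < /4 * (1/2)^i) by (pose proof (half_pos i); lra).
      pose proof (proj2 (is_lim_seq_spec _ _) (Hk ma) (mkposreal _ Hdel)) as [Na HNa].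
      pose proof (proj2 (is_lim_seq_spec _ _) (Hk mb) (mkposreal _ Hdel)) as [Nb HNb].
      pose proof (proj2 (is_lim_seq_spec _ _) (Hk mc) (mkposreal _ Hdel)) as [Nc HNc].
      exists (Nat.max (Nat.max Na Nb) Nc). intros j Hj.
      rewrite Rminus_0_r, Rabs_pos_eq by apply dG_nn.
      eapply Rle_lt_trans; [apply UBG with (i := i)|exact Hi].
      intros k; destruct k.
      - specialize (HNa j ltac:(lia)). simpl in HNa. rewrite Rminus_0_r in HNa. lra.
      - specialize (HNb j ltac:(lia)). simpl in HNb. rewrite Rminus_0_r in HNb. lra.
      - specialize (HNc j ltac:(lia)). simpl in HNc. rewrite Rminus_0_r in HNc. lra. }
    rewrite (is_lim_seq_unique _ _ HL). reflexivity.
Qed.
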